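(* Let $q\neq0$ and let $\gamma\colon I\to\mathbb R^3$ be a curve parametrized by arc-length which is not a straight line and satisfies $\gamma''=q\,\gamma\times\gamma'$ (i.e. $\gamma$ is a conformal trajectory of the radial vector field $V(x,y,z)=x\partial_x+y\partial_y+z\partial_z$). Then the curvature of $\gamma$ is a nonzero constant $\kappa_0$, and there exists $a_0\in\mathbb R$ such that $\langle\gamma(s),\gamma'(s)\rangle=s+a_0$, the torsion is the affine function $\tau(s)=q(s+a_0)$, and $$\gamma(s)=(s+a_0)\gamma'(s)+\frac1q\,\gamma'(s)\times\gamma''(s)\quad\text{for all }s\in I.$$
   Context: $\times$ denotes the usual cross product of $\mathbb R^3$ and $\langle\cdot,\cdot\rangle$ the Euclidean inner product. Frenet frame of a non-straight unit-speed curve: $T=\gamma'$, $T'=\kappa N$ with $\kappa>0$, $B=T\times N$, $N'=-\kappa T+\tau B$, $B'=-\tau N$; $\kappa$ is the curvature and $\tau$ the torsion. *)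

(* Defs.v *)
From Stdlib Require Import Reals.
From Coquelicot Require Import Coquelicot.
Open Scope R_scope.

Definition vec := (R * R * R)%type.
Definition vx (v : vec) : R := fst (fst v).
Definition vy (v : vec) : R := snd (fst v).
Definition vz (v : vec) : R := snd v.
Definition mkv (a b c : R) : vec := (a, b, c).

Definition vadd (u v : vec) : vec := mkv (vx u + vx v) (vy u + vy v) (vz u + vz v).
Definition vscal (k : R) (v : vec) : vec := mkv (k * vx v) (k * vy v) (k * vz v).
Definition dot (u v : vec) : R := vx u * vx v + vy u * vy v + vz u * vz v.
Definition cross (u v : vec) : vec :=
  mkv (vy u * vz v - vz u * vy v)
      (vz u * vx v - vx u * vz v)
      (vx u * vy v - vy u * vx v).
Definition vnorm (v : vec) : R := sqrt (dot v v).

Definition vderiv (f : R -> vec) (s : R) (v : vec) : Prop :=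
  is_derive (fun t => vx (f t)) s (vx v) /\
  is_derive (fun t => vy (f t)) s (vy v) /\
  is_derive (fun t => vz (f t)) s (vz v).

Definition in_interval (a b : Rbar) (s : R) : Prop := Rbar_lt a s /\ Rbar_lt s b.

(* Frenet apparatus of a curve with velocity g1 and acceleration g2 *)
Definition curvature (g2 : R -> vec) (s : R) : R := vnorm (g2 s).
Definition frenetT (g1 : R -> vec) (s : R) : vec := g1 s.
Definition frenetN (g2 : R -> vec) (s : R) : vec := vscal (/ curvature g2 s) (g2 s).
Definition frenetB (g1 g2 : R -> vec) (s : R) : vec := cross (frenetT g1 s) (frenetN g2 s).

Definition is_torsion (a b : Rbar) (g1 g2 : R -> vec) (tau : R -> R) : Prop :=
  forall s, in_interval a b s ->
    vderiv (frenetN g2) s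
      (vadd (vscal (- curvature g2 s) (frenetT g1 s)) (vscal (tau s) (frenetB g1 g2 s))).

(* Main.v *)
Require Import Defs.
From Stdlib Require Import Reals Lra Psatz.
From Coquelicot Require Import Coquelicot.
Open Scope R_scope.

Lemma DM f g x df dg : is_derive f x df -> is_derive g x dg ->
  is_derive (fun t => f t * g t) x (df * g x + f x * dg).
Proof. intros; apply (is_derive_mult f g x df dg); auto; intros; apply Rmult_comm. Qed.
Lemma DP f g x df dg : is_derive f x df -> is_derive g x dg ->
  is_derive (fun t => f t + g t) x (df + dg).
Proof. intros; apply (is_derive_plus f g x df dg); auto. Qed.
Lemma DS f g x df dg : is_derive f x df -> is_derive g x dg ->
  is_derive (fun t => f t - g t) x (df - dg).
Proof. intros; apply (is_derive_minus f g x df dg); auto. Qed.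
Lemma DE (f : R -> R) x l l' : is_derive f x l -> l = l' -> is_derive f x l'.
Proof. intros; subst; auto. Qed.

Lemma in_conv a b s t x : in_interval a b s -> in_interval a b t ->
  Rmin s t <= x <= Rmax s t -> in_interval a b x.
Proof.
  intros [H1 H2] [H3 H4] [H5 H6]; split.
  - apply (Rbar_lt_le_trans a (Rmin s t) x); [|exact H5].
    unfold Rmin; destruct (Rle_dec s t); auto.
  - apply (Rbar_le_lt_trans x (Rmax s t) b); [exact H6|].
    unfold Rmax; destruct (Rle_dec s t); auto.
Qed.

Lemma const_on a b (f : R -> R) : (forall s, in_interval a b s -> is_derive f s 0) ->
  forall s t, in_interval a b s -> in_interval a b t -> f s = f t.
Proof.
  intros Hd s t Hs Ht.
  destruct (MVT_gen f s t (fun _ => 0)) as [c [_ Hc]].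
  - intros x Hx; apply Hd; apply (in_conv a b s t); auto; lra.
  - intros x Hx. apply continuity_pt_filterlim. apply (ex_derive_continuous (K:=R_AbsRing) (V:=R_NormedModule)).
    exists 0; apply Hd; apply (in_conv a b s t); auto; lra.
  - lra.
Qed.

Lemma int_loc a b s : in_interval a b s -> locally s (in_interval a b).
Proof.
  intros Hs. apply (open_and (T:=R_UniformSpace) (fun u : R => Rbar_lt a u) (fun u : R => Rbar_lt u b)).
  apply open_Rbar_gt. apply open_Rbar_lt. exact Hs.
Qed.

Lemma vec_eq (u v : vec) : vx u = vx v -> vy u = vy v -> vz u = vz v -> u = v.
Proof. destruct u as [[x y] z], v as [[x' y'] z']; unfold vx, vy, vz; simpl; intros; subst; auto. Qed.

Theorem theorem1 (q : R) (a b : Rbar) (g g1 g2 : R -> vec) :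
  q <> 0 ->
  Rbar_lt a b ->
  (forall s, in_interval a b s -> vderiv g s (g1 s)) ->
  (forall s, in_interval a b s -> vderiv g1 s (g2 s)) ->
  (forall s, in_interval a b s -> vnorm (g1 s) = 1) ->
  (exists s, in_interval a b s /\ g2 s <> mkv 0 0 0) ->
  (forall s, in_interval a b s -> g2 s = vscal q (cross (g s) (g1 s))) ->
  (exists k0, k0 <> 0 /\ forall s, in_interval a b s -> curvature g2 s = k0) /\
  (exists a0,
     (forall s, in_interval a b s -> dot (g s) (g1 s) = s + a0) /\
     is_torsion a b g1 g2 (fun s => q * (s + a0)) /\
     (forall s, in_interval a b s ->
        g s = vadd (vscal (s + a0) (g1 s)) (vscal (/ q) (cross (g1 s) (g2 s))))).
Proof.
  intros Hq Hab Hg Hg1 Hn [s0 [Hs0 Hns]] Hacc.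
  assert (HT : forall s, in_interval a b s -> dot (g1 s) (g1 s) = 1).
  { intros s Hs. specialize (Hn s Hs). unfold vnorm in Hn.
    assert (H0 : 0 <= dot (g1 s) (g1 s)) by (unfold dot; nra).
    rewrite <- (sqrt_sqrt _ H0), Hn; ring. }
  set (a0 := dot (g s0) (g1 s0) - s0).
  assert (HA : forall s, in_interval a b s -> dot (g s) (g1 s) = s + a0).
  { intros s Hs.
    assert (E : (fun t => dot (g t) (g1 t) - t) s = (fun t => dot (g t) (g1 t) - t) s0).
    { apply (const_on a b (fun t => dot (g t) (g1 t) - t)); auto. intros u Hu.
      destruct (Hg u Hu) as [X [Y Z]]; destruct (Hg1 u Hu) as [X1 [Y1 Z1]].
      unfold dot. eapply DE.
      { apply DS; [|apply is_derive_id].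
        apply DP; [apply DP|]; apply DM; eauto. }
      change (@one R_AbsRing) with 1.
      specialize (HT u Hu). rewrite (Hacc u Hu). unfold dot, vscal, cross, vx, vy, vz, mkv in *; simpl in *.
      nra. }
    simpl in E. unfold a0. lra. }
  set (C := fun t => q * q * (dot (g t) (g t) - dot (g t) (g1 t) * dot (g t) (g1 t))).
  assert (HC : forall s, in_interval a b s -> C s = C s0).
  { intros s Hs. apply (const_on a b C); auto. intros u Hu.
    destruct (Hg u Hu) as [X [Y Z]]; destruct (Hg1 u Hu) as [X1 [Y1 Z1]].
    unfold C, dot. eapply DE.
    { apply is_derive_scal. apply DS; [|apply DM];
      (apply DP; [apply DP|]; apply DM; eauto). }
    specialize (HT u Hu). rewrite (Hacc u Hu).
    transitivity (q * q * (2 * dot (g u) (g1 u) - 2 * dot (g u) (g1 u) * (dot (g1 u) (g1 u) + q * (dot (g u) (cross (g u) (g1 u)))))).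
    { unfold dot, vscal, cross, vx, vy, vz, mkv; simpl. ring. }
    rewrite HT. replace (dot (g u) (cross (g u) (g1 u))) with 0 by (unfold dot, cross, vx, vy, vz, mkv; simpl; ring).
    match goal with |- ?x = ?y => change (@eq R x y) end; ring. }
  assert (HG2 : forall s, in_interval a b s -> dot (g2 s) (g2 s) = C s).
  { intros s Hs. specialize (HT s Hs). unfold C. rewrite (Hacc s Hs).
    unfold dot, vscal, cross, vx, vy, vz, mkv in *; simpl in *. nra. }
  assert (Hp : 0 < dot (g2 s0) (g2 s0)).
  { revert Hns. destruct (g2 s0) as [[x y] z]. unfold dot, vx, vy, vz, mkv; simpl. intro Hns.
    destruct (Req_dec x 0), (Req_dec y 0), (Req_dec z 0); subst;
      [exfalso; apply Hns; reflexivity | nra ..]. }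
  rewrite HG2 in Hp by auto.
  set (k0 := sqrt (C s0)).
  assert (Hk : forall s, in_interval a b s -> curvature g2 s = k0).
  { intros s Hs. unfold curvature, vnorm. rewrite HG2, HC by auto. reflexivity. }
  assert (Hk0 : 0 < k0) by (apply sqrt_lt_R0; auto).
  assert (Hk2 : k0 * k0 = C s0) by (apply sqrt_sqrt; lra).
  split; [exists k0; split; [lra | exact Hk]|].
  exists a0. split; [exact HA|]. split.
  - intros s Hs.
    assert (HN : locally s (fun t => frenetN g2 t = vscal (/k0) (vscal q (cross (g t) (g1 t))))).
    { eapply filter_imp; [|apply int_loc; exact Hs]. intros t Ht.
      unfold frenetN. rewrite Hk, <- Hacc by auto. reflexivity. }
    destruct (Hg s Hs) as [X [Y Z]]; destruct (Hg1 s Hs) as [X1 [Y1 Z1]].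
    unfold vderiv.
    unfold frenetB, frenetN, frenetT. rewrite Hk by auto. rewrite (Hacc s Hs).
    rewrite <- (HA s Hs). specialize (HT s Hs). specialize (HC s Hs).
    rewrite <- Hk2 in HC. unfold C in HC.
    assert (Hik : k0 * / k0 = 1) by (field; lra).
    set (ik := / k0) in *.
    rewrite (Hacc s Hs) in X1, Y1, Z1.
    remember (g s) as G eqn:EG; destruct G as [[gx gy] gz].
    remember (g1 s) as G1 eqn:EG1; destruct G1 as [[tx ty] tz].
    split; [|split];
    [apply (is_derive_ext_loc (fun t => vx (vscal ik (vscal q (cross (g t) (g1 t))))))
    |apply (is_derive_ext_loc (fun t => vy (vscal ik (vscal q (cross (g t) (g1 t))))))
    |apply (is_derive_ext_loc (fun t => vz (vscal ik (vscal q (cross (g t) (g1 t))))))];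
    try (eapply filter_imp; [|exact HN]; intros t Ht; cbv beta in Ht |- *; rewrite <- Ht; reflexivity);
    unfold dot, vadd, vscal, cross, vx, vy, vz, mkv in *; simpl in *;
    (eapply DE; [apply is_derive_scal, is_derive_scal, DS; apply DM; eauto|]);
    (assert (Ek : k0 = ik * (q * q * (gx * gx + gy * gy + gz * gz -
     (gx * tx + gy * ty + gz * tz) * (gx * tx + gy * ty + gz * tz))))
      by (rewrite HC; transitivity (k0 * (k0 * ik)); [rewrite Hik; ring | ring]));
    rewrite Ek at 1; apply Rminus_diag_uniq.
    1-3: rewrite <- ?EG, <- ?EG1; simpl.
    1-3: match goal with |- ?x = ?y => change (@eq R x y) end.
    1-3: first
    [ match goal with |- ?L = 0 => replace L with (ik*q*q*(gx*tx+gy*ty+gz*tz)*gx*(1 - (tx*tx+ty*ty+tz*tz))) by ring end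
    | match goal with |- ?L = 0 => replace L with (ik*q*q*(gx*tx+gy*ty+gz*tz)*gy*(1 - (tx*tx+ty*ty+tz*tz))) by ring end
    | match goal with |- ?L = 0 => replace L with (ik*q*q*(gx*tx+gy*ty+gz*tz)*gz*(1 - (tx*tx+ty*ty+tz*tz))) by ring end ];
    rewrite HT; ring.
  - intros s Hs. specialize (HT s Hs). rewrite (Hacc s Hs), <- (HA s Hs).
    remember (g s) as G eqn:EG; destruct G as [[gx gy] gz].
    remember (g1 s) as G1 eqn:EG1; destruct G1 as [[tx ty] tz].
    unfold dot, vadd, vscal, cross, vx, vy, vz, mkv in *; simpl in *.
    apply vec_eq; unfold vx, vy, vz; simpl; apply Rminus_diag_uniq;
    first
    [ match goal with |- ?L = 0 => replace L with (gx*(1 - (tx*tx+ty*ty+tz*tz))) by (field; auto) end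
    | match goal with |- ?L = 0 => replace L with (gy*(1 - (tx*tx+ty*ty+tz*tz))) by (field; auto) end
    | match goal with |- ?L = 0 => replace L with (gz*(1 - (tx*tx+ty*ty+tz*tz))) by (field; auto) end ];
    rewrite HT; ring.
Qed.
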